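(* For all $U,V\in\mathcal{U}(d)$, $|H_2(U)-H_2(V)|\le\frac{4\pi}{\sqrt d}\|U-V\|_F$; that is, $H_2$ is Lipschitz on $\mathcal{U}(d)$ with respect to the Hilbert–Schmidt norm with Lipschitz constant at most $4\pi/\sqrt d$.
   Context: On $\mathbb{C}^{d_L}$ let $Z|k\rangle=\omega^k|k\rangle$, $X|k\rangle=|k+1\rangle$ (mod $d_L$), $\omega=e^{2\pi i/d_L}$, $\tau=-e^{i\pi/d_L}$, $D_{(a_1,a_2)}=\tau^{a_1a_2}X^{a_1}Z^{a_2}$, and for $\mathbf a=\mathbf a_1\oplus\cdots\oplus\mathbf a_n\in\mathbb{Z}_{d_L}^{2n}$ let $D_{\mathbf a}=D_{\mathbf a_1}\otimes\cdots\otimes D_{\mathbf a_n}$ acting on $\mathbb{C}^d$, $d=d_L^n$. The 2-Clifford entropy of a unitary $U$ is $H_2(U)=1-\frac{1}{d^6}\sum_{\mathbf a,\mathbf b}\big|\operatorname{tr}(D_{\mathbf a}^\dagger UD_{\mathbf b}U^\dagger)\big|^4$. $\|A\|_F=\sqrt{\operatorname{tr}(A^\dagger A)}$. *)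

(* Defs.v *)
From HB Require Import structures.
From mathcomp Require Import all_boot all_order all_algebra.
From mathcomp Require Import reals trigo.
From mathcomp Require Import complex.
Set Implicit Arguments. Unset Strict Implicit. Unset Printing Implicit Defensive.
Import Order.TTheory GRing.Theory Num.Theory.
Local Open Scope ring_scope.
Local Open Scope complex_scope.

Section Defs.
Variable R : realType.
Local Notation C := R[i].

Definition expi (x : R) : C := cos x +i* sin x.

Definition cabs (z : C) : R := Num.sqrt (complex.Re z ^+ 2 + complex.Im z ^+ 2).

Definition adj m n (A : 'M[C]_(m, n)) : 'M[C]_(n, m) :=
  \matrix_(i, j) (A j i)^*.

Definition unitary_mx d (U : 'M[C]_d) : Prop := U *m adj U = 1%:M.

(* Frobenius / Hilbert-Schmidt norm  sqrt(tr(A^dagger A)) (the trace is real) *)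
Definition frob m n (A : 'M[C]_(m, n)) : R := Num.sqrt (complex.Re (\tr (adj A *m A))).

Variable dL : nat.

Definition omega : C := expi (2 * pi / dL%:R).
Definition tau : C := - expi (pi / dL%:R).

Definition Xmx : 'M[C]_dL := \matrix_(i, j) ((i : nat) == (j + 1) %% dL)%N%:R.
Definition Zmx : 'M[C]_dL := \matrix_(i, j) (((i : nat) == j)%:R * omega ^+ j).

(* D_{(a1,a2)} = tau^{a1 a2} X^{a1} Z^{a2}, with a1, a2 in Z_dL represented by
   their representatives in {0, ..., dL-1} *)
Definition D1 (a : 'I_dL * 'I_dL) : 'M[C]_dL :=
  tau ^+ (a.1 * a.2)%N *: (Xmx ^+ a.1 *m Zmx ^+ a.2).

(* n qudits: computational basis of (C^dL)^{\otimes n} indexed by n-tuples *)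
Definition qidx (n : nat) := {ffun 'I_n -> 'I_dL}.
Definition qdim (n : nat) := #|qidx n|.

(* D_a = D_{a_1} (x) ... (x) D_{a_n}, a in Z_dL^{2n} *)
Definition Dn n (a : {ffun 'I_n -> 'I_dL * 'I_dL}) : 'M[C]_(qdim n) :=
  \matrix_(i, j) \prod_(k < n)
     D1 (a k) ((enum_val i : qidx n) k) ((enum_val j : qidx n) k).

Definition H2 n (U : 'M[C]_(qdim n)) : R :=
  1 - ((qdim n)%:R ^+ 6)^-1 *
    \sum_(a : {ffun 'I_n -> 'I_dL * 'I_dL})
    \sum_(b : {ffun 'I_n -> 'I_dL * 'I_dL})
      cabs (\tr (adj (Dn a) *m U *m Dn b *m adj U)) ^+ 4.

End Defs.

(* Main.v *)
Require Import Defs.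
From HB Require Import structures.
From mathcomp Require Import all_boot all_order all_algebra.
From mathcomp Require Import reals trigo.
From mathcomp Require Import complex.
From mathcomp Require Import ring lra zify.
Import Order.TTheory GRing.Theory Num.Theory.
Local Open Scope ring_scope.
Local Open Scope complex_scope.

Section Cplx.
Variable R : realType.
Local Notation C := R[i].

Definition nsq (z : C) : R := complex.Re z ^+ 2 + complex.Im z ^+ 2.

Lemma nsq_ge0 z : 0 <= nsq z.
Proof. by rewrite /nsq addr_ge0 // sqr_ge0. Qed.

Lemma mulcJ z : z * (conjc z) = (nsq z)%:C.
Proof. case: z => a b; rewrite /nsq /=; simpc; apply/eqP; rewrite eq_complex /=.
by apply/andP; split; apply/eqP; rewrite ?expr2; [ring|ring]. Qed.

Lemma cabsE z : @cabs R z = Num.sqrt (nsq z). Proof. by []. Qed.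

Lemma cabs_ge0 z : 0 <= @cabs R z. Proof. exact: sqrtr_ge0. Qed.

Lemma cabs_sqr z : @cabs R z ^+ 2 = nsq z.
Proof. by rewrite cabsE sqr_sqrtr // nsq_ge0. Qed.

Lemma cabs_norm z : `|z| = (@cabs R z)%:C.
Proof. by rewrite normc_def. Qed.

Lemma cabsD x y : @cabs R (x + y) <= @cabs R x + @cabs R y.
Proof. by rewrite -lecR rmorphD /= -!cabs_norm ler_normD. Qed.

Lemma cabs_sub x y : `|@cabs R x - @cabs R y| <= @cabs R (x - y).
Proof.
have h1 := cabsD y (x - y); have h2 := cabsD x (y - x).
rewrite addrC subrK in h1; rewrite addrC subrK in h2.
have e : @cabs R (y - x) = @cabs R (x - y).
  by rewrite /cabs /= -opprB; case: (x - y) => a b /=; rewrite !sqrrN.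
rewrite e in h2.
by rewrite ler_norml; apply/andP; split; rewrite ?lerBlDr ?lerBrDl ?opprB; lra.
Qed.

Lemma nsqD x y : nsq (x + y) <= 2 * nsq x + 2 * nsq y.
Proof. case: x y => a b [c d]; rewrite /nsq /=.
have h1 : 0 <= (a - c) ^+ 2 by exact: sqr_ge0.
have h2 : 0 <= (b - d) ^+ 2 by exact: sqr_ge0.
rewrite !expr2 in h1 h2 *. nra. Qed.

Lemma Re_sum (I : finType) (F : I -> C) : complex.Re (\sum_i F i) = \sum_i complex.Re (F i).
Proof. apply: (big_morph _ (fun x y => _) (erefl _)) => [[a b] [c d]] //. Qed.

Lemma nsq_re z : complex.Re ((conjc z) * z) = nsq z.
Proof. by rewrite mulrC mulcJ. Qed.

Lemma expi_mul x y : @expi R x * @expi R y = @expi R (x + y).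
Proof. rewrite /expi sinD cosD; simpc; apply/eqP; rewrite eq_complex /=.
by apply/andP; split; apply/eqP; ring. Qed.

Lemma expiJ x : (conjc (@expi R x)) * @expi R x = 1.
Proof. rewrite mulrC mulcJ /nsq /= cos2Dsin2 //. Qed.

Lemma expiX x m : @expi R x ^+ m = @expi R (x *+ m).
Proof. elim: m => [|m IH]; first by rewrite expr0 mulr0n /expi cos0 sin0.
by rewrite exprS IH expi_mul mulrS. Qed.

Lemma expi_eq1 x : 0 < x < pi *+ 2 -> @expi R x != 1.
Proof.
move=> /andP [h0 h1]; apply/negP => /eqP [hc hs].
have e : x = (x / 2) *+ 2 by rewrite -mulr_natr divfK // pnatr_eq0.
have hs2 : 0 < sin (x / 2).
  apply: sin_gt0_pi; apply/andP; split; first by rewrite divr_gt0.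
  by rewrite ltr_pdivrMr // mulr_natr.
move: hc; rewrite e cos_mulr2n => hc.
have := cos2Dsin2 (x / 2).
have : cos (x / 2) ^+ 2 = 1.
  by move: hc; rewrite mulr2n => hc; lra.
move=> -> h; have : sin (x / 2) ^+ 2 = 0 by lra.
by move/eqP; rewrite sqrf_eq0 => /eqP h'; move: hs2; rewrite h' ltxx.
Qed.

End Cplx.

Lemma modn_lt2 x m : (x < m.*2)%N -> (x %% m = if (x < m) then x else (x - m))%N.
Proof.
case: (ltnP x m) => h h2; first by rewrite modn_small.
by rewrite -{1}(subnK h) modnDr modn_small //; lia.
Qed.

Section Qudit.
Variable R : realType.
Local Notation C := R[i].
Variable dL : nat.
Hypothesis hdL : (1 < dL)%N.
Local Notation om := (omega R dL).

Lemma natT : (true%:R : C) = 1. Proof. by []. Qed.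

Lemma sum_delta (T : finType) (j : T) (F : T -> C) : \sum_i ((i == j)%:R * F i) = F j.
Proof.
rewrite (bigD1 j) //= eqxx mul1r big1 ?addr0 // => i /negbTE ->; by rewrite mul0r.
Qed.

Lemma sum_delta_nat n (c : nat) (hc : (c < n)%N) (F : 'I_n -> C) :
  \sum_(i < n) (((i : nat) == c)%:R * F i) = F (Ordinal hc).
Proof. by rewrite -(@sum_delta _ (Ordinal hc)). Qed.

Lemma XmxX m : Xmx R dL ^+ m = \matrix_(i, j) ((i : nat) == ((j + m) %% dL)%N)%:R.
Proof.
elim: m => [|m IH]; apply/matrixP => i j.
  by rewrite expr0 !mxE addn0 modn_small.
rewrite exprS -mulmxE IH !mxE.
have hc : ((j + m) %% dL < dL)%N by rewrite ltn_pmod //; lia.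
under eq_bigr => l _ do rewrite !mxE mulrC.
by rewrite sum_delta_nat /= modnDml addn1 addnS.
Qed.

Lemma ZmxX m : Zmx R dL ^+ m = \matrix_(i, j) (((i : nat) == j)%:R * (om ^+ j) ^+ m).
Proof.
elim: m => [|m IH]; apply/matrixP => i j.
  by rewrite expr0 !mxE expr0 mulr1.
rewrite exprS -mulmxE IH !mxE.
rewrite (bigD1 i) //= big1 => [|l hl]; last first.
  rewrite /Zmx !mxE; case: eqP => [/val_inj ?|_]; last by rewrite !mul0r.
  by subst; rewrite eqxx in hl.
rewrite /Zmx !mxE eqxx /= mul1r addr0; case: eqP => [/val_inj ->|_]; last by rewrite !mul0r mulr0.
by rewrite mul1r exprS -[true%:R]/(1 *+ 1) mulr1n mul1r.
Qed.

Lemma D1E (a : 'I_dL * 'I_dL) (i j : 'I_dL) : D1 R a i j =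
  tau R dL ^+ (a.1 * a.2) * (((i : nat) == ((j + a.1) %% dL)%N)%:R * (om ^+ j) ^+ a.2).
Proof.
rewrite /D1 !mxE XmxX ZmxX; congr (_ * _).
rewrite (bigD1 j) //= big1 => [|l hl]; last first.
  have hl' : ((l : nat) == j) = false by exact: negbTE hl.
  by rewrite !mxE hl' !mul0r mulr0.
by rewrite !mxE eqxx addr0 natT mul1r.
Qed.

End Qudit.



Section Qudit2.
Variable R : realType.
Local Notation C := R[i].
Variable dL : nat.
Hypothesis hdL : (1 < dL)%N.
Local Notation om := (omega R dL).

Lemma conjcM (x y : C) : (conjc (x * y)) = (conjc x) * (conjc y). Proof. exact: rmorphM. Qed.
Lemma conjcX (x : C) n : (conjc (x ^+ n)) = (conjc x) ^+ n. Proof. exact: rmorphXn. Qed.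
Lemma conjcN (x : C) : (conjc (- x)) = - (conjc x). Proof. exact: rmorphN. Qed.

Lemma natF : (false%:R : C) = 0. Proof. by []. Qed.

Lemma dL_neq0 : (dL%:R : R) != 0. Proof. by rewrite pnatr_eq0; lia. Qed.

Lemma omJ k : (conjc (om ^+ k)) * om ^+ k = 1.
Proof. by rewrite conjcX -exprMn /omega expiJ expr1n. Qed.

Lemma tauJ k : (conjc (tau R dL ^+ k)) * tau R dL ^+ k = 1.
Proof. by rewrite conjcX -exprMn /tau conjcN mulrNN expiJ expr1n. Qed.

Lemma om_dL : om ^+ dL = 1.
Proof.
rewrite /omega expiX -[_ *+ dL]mulr_natr divfK ?dL_neq0 // mulr_natl /expi cos2pi sin2pi.
by [].
Qed.

Lemma om_neq1 m : (0 < m < dL)%N -> om ^+ m != 1.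
Proof.
move=> hm; rewrite /omega expiX; apply: expi_eq1.
have h0 : (0 : R) < m%:R by rewrite ltr0n; lia.
have h1 : (m%:R : R) < dL%:R by rewrite ltr_nat; lia.
have hd : (0 : R) < dL%:R by rewrite ltr0n; lia.
have hp : (0:R) < pi * 2 by rewrite mulr_gt0 ?pi_gt0.
have e : (2 * (pi : R) / dL%:R) *+ m = (m%:R / dL%:R) * (pi * 2).
  rewrite -mulr_natr; field; exact: dL_neq0.
rewrite e -[pi *+ 2]mulr_natr; apply/andP; split.
  by rewrite mulr_gt0 // divr_gt0.
by rewrite -[X in _ < X]mul1r ltr_pM2r // ltr_pdivrMr // mul1r.
Qed.


Lemma G_sum (i i' : 'I_dL) :
  \sum_(a2 < dL) (conjc ((om ^+ i) ^+ a2)) * (om ^+ i') ^+ a2 = dL%:R * (i == i')%:R.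
Proof.
under eq_bigr => a2 _ do rewrite conjcX -exprMn.
case: (eqVneq i i') => [<-|ne].
  under eq_bigr do rewrite omJ expr1n.
  by rewrite sumr_const card_ord natT mulr1.
set z := (conjc (om ^+ i)) * om ^+ i'.
rewrite mulr0.
have zdL : z ^+ dL = 1.
  by rewrite /z exprMn -conjcX exprAC om_dL exprAC om_dL !expr1n rmorph1 mulr1.
have zn1 : z != 1.
  have : (i < i')%N \/ (i' < i)%N.
    have : (i : nat) != i' by exact: ne.
    lia.
  case=> h.
  - have -> : z = om ^+ (i' - i).
      by rewrite /z -(subnKC (ltnW h)) exprD mulrA omJ mul1r subnKC // ltnW.
    apply: om_neq1; have := ltn_ord i'; lia.
  - have -> : z = (conjc (om ^+ (i - i'))).
      by rewrite /z -(subnKC (ltnW h)) exprD conjcM mulrAC omJ mul1r subnKC // ltnW.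
    apply/negP => /eqP h1.
    have : om ^+ (i - i') == 1 by rewrite -[om ^+ _]conjcK h1 conjc1.
    by apply/negP; apply: om_neq1; have := ltn_ord i; lia.
have := subrX1 z dL; rewrite zdL subrr => /esym /eqP; rewrite mulf_eq0.
by rewrite subr_eq0 (negbTE zn1) /= => /eqP.
Qed.

Lemma shift_eq (l i a : 'I_dL) :
  ((l : nat) == (i + a) %% dL)%N = ((a : nat) == (l + dL - i) %% dL)%N.
Proof.
have hl := ltn_ord l; have hi := ltn_ord i; have ha := ltn_ord a.
rewrite !modn_lt2; try lia.
case: (ltnP (i + a) dL) => h1; case: (ltnP (l + dL - i) dL) => h2; apply/eqP/eqP; lia.
Qed.

Lemma shift_inj (i i' a : 'I_dL) :
  ((i + a) %% dL == (i' + a) %% dL)%N = (i == i').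
Proof.
have hi' := ltn_ord i'; have hi := ltn_ord i; have ha := ltn_ord a.
rewrite !modn_lt2; try lia.
rewrite -val_eqE /=.
case: (ltnP (i + a) dL) => h1; case: (ltnP (i' + a) dL) => h2; apply/eqP/eqP; lia.
Qed.

Lemma D1_cj (a : 'I_dL * 'I_dL) (l i l' i' : 'I_dL) :
  (conjc (D1 R a l i)) * D1 R a l' i' =
  ((l : nat) == (i + a.1) %% dL)%N%:R * ((l' : nat) == (i' + a.1) %% dL)%N%:R *
  ((conjc ((om ^+ i) ^+ a.2)) * (om ^+ i') ^+ a.2).
Proof.
rewrite !(@D1E R dL hdL) !conjcM !conjc_nat mulrACA tauJ mul1r.
by rewrite mulrACA.
Qed.

Lemma sum_shift (l i : 'I_dL) :
  \sum_(a1 < dL) ((l : nat) == (i + a1) %% dL)%N%:R = 1 :> C.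
Proof.
have hc : ((l + dL - i) %% dL < dL)%N by rewrite ltn_pmod //; lia.
rewrite (eq_bigr (fun a1 : 'I_dL => ((a1 : nat) == ((l + dL - i) %% dL)%N)%:R * 1)).
  by rewrite sum_delta_nat.
by move=> a1 _; rewrite mulr1 shift_eq.
Qed.

Lemma boolsq (b : bool) : (b%:R * b%:R : C) = b%:R.
Proof. by case: b; rewrite ?natT ?mulr1 ?mul0r. Qed.

Lemma D1_unit (a : 'I_dL * 'I_dL) (i i' : 'I_dL) :
  \sum_l (conjc (D1 R a l i)) * D1 R a l i' = (i == i')%:R.
Proof.
have hc : ((i + a.1) %% dL < dL)%N by rewrite ltn_pmod //; lia.
under eq_bigr do rewrite D1_cj -!mulrA.
rewrite (@sum_delta_nat R _ _ hc) /= shift_inj.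
case: (eqVneq i i') => [<-|ne]; last by rewrite !mul0r.
by rewrite natT mul1r -!exprM omJ.
Qed.

Lemma D1_par (l i l' i' : 'I_dL) :
  \sum_(a : 'I_dL * 'I_dL) (conjc (D1 R a l i)) * D1 R a l' i' =
  dL%:R * (l == l')%:R * (i == i')%:R.
Proof.
have -> : \sum_(a : 'I_dL * 'I_dL) (conjc (D1 R a l i)) * D1 R a l' i' =
    \sum_(a1 < dL) \sum_(a2 < dL) (conjc (D1 R (a1, a2) l i)) * D1 R (a1, a2) l' i'.
  by rewrite pair_big; apply: eq_bigr => -[a1 a2].
under eq_bigr => a1 _ do under eq_bigr => a2 _ do rewrite D1_cj /=.
under eq_bigr => a1 _ do rewrite -mulr_sumr G_sum.
rewrite -mulr_suml.
case: (eqVneq i i') => [<-|ne]; last by rewrite natF !mulr0.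
rewrite natT !mulr1 mulrC.
case: (eqVneq l l') => [<-|ne]; first by under eq_bigr do rewrite boolsq; rewrite sum_shift natT.
rewrite big1 ?natF ?mulr0 // => a1 _.
case: eqP => h1; case: eqP => h2; rewrite ?mul0r ?mulr0 //.
have : l = l' by apply: val_inj => /=; rewrite h1 h2.
by move=> e; rewrite e eqxx in ne.
Qed.

End Qudit2.



Section Tensor.
Variable R : realType.
Local Notation C := R[i].
Variable dL : nat.
Hypothesis hdL : (1 < dL)%N.
Variable n : nat.
Local Notation T := (qidx dL n).
Local Notation d := (qdim dL n).

Lemma conjc_prod (F : 'I_n -> C) : conjc (\prod_k F k) = \prod_k conjc (F k).
Proof. exact: rmorph_prod. Qed.

Lemma prod_eq (f g : T) : \prod_k ((f k == g k)%:R : C) = (f == g)%:R.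
Proof.
case: (eqVneq f g) => [<-|ne]; first by rewrite big1 // => k _; rewrite eqxx.
have : ~~ [forall k, f k == g k].
  by apply: contra ne => /forallP h; apply/eqP/ffunP => k; apply/eqP; exact: h k.
rewrite negb_forall => /existsP [k hk].
by rewrite (bigD1 k) //= (negbTE hk) natF mul0r.
Qed.

Lemma prod_ev (i i' : 'I_d) :
  \prod_k (((enum_val i : T) k == (enum_val i' : T) k)%:R : C) = (i == i')%:R.
Proof. by rewrite prod_eq (inj_eq enum_val_inj). Qed.

Lemma qdimE : d = (dL ^ n)%N.
Proof. by rewrite /qdim /qidx card_ffun !card_ord. Qed.

Lemma card_pairs : #|{ffun 'I_n -> 'I_dL * 'I_dL}| = (d * d)%N.
Proof. by rewrite card_ffun card_prod !card_ord qdimE expnMn. Qed.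

Lemma sum_enum (F : T -> C) : \sum_(l < d) F (enum_val l) = \sum_f F f.
Proof.
rewrite (reindex (@enum_rank T)) /=; last by apply: onW_bij; exact: enum_rank_bij.
by apply: eq_bigr => f _; rewrite enum_rankK.
Qed.

Lemma Dn_unit (b : {ffun 'I_n -> 'I_dL * 'I_dL}) : adj (Dn R b) *m Dn R b = 1%:M.
Proof.
apply/matrixP => i i'; rewrite !mxE.
under eq_bigr => l _ do rewrite !mxE conjc_prod -big_split /=.
rewrite (sum_enum (fun f : T => \prod_k (conjc (D1 R (b k) (f k) ((enum_val i : T) k)) *
   D1 R (b k) (f k) ((enum_val i' : T) k)))).
rewrite -(bigA_distr_bigA (fun k t => conjc (D1 R (b k) t ((enum_val i : T) k)) *
   D1 R (b k) t ((enum_val i' : T) k))) /=.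
under eq_bigr => k _ do rewrite (@D1_unit R dL hdL).
by rewrite prod_ev.
Qed.


Local Notation ev := (fun (x : 'I_d) => (enum_val x : T)).

Lemma Dn_par (l i l' i' : 'I_d) :
  \sum_(a : {ffun 'I_n -> 'I_dL * 'I_dL}) conjc (Dn R a l i) * Dn R a l' i' =
  d%:R * (l == l')%:R * (i == i')%:R.
Proof.
under eq_bigr => a _ do rewrite !mxE conjc_prod -big_split /=.
rewrite -(bigA_distr_bigA (fun k t => conjc (D1 R t (ev l k) (ev i k)) *
   D1 R t (ev l' k) (ev i' k))) /=.
under eq_bigr => k _ do rewrite (@D1_par R dL hdL).
by rewrite !big_split /= prod_ev prod_ev prodr_const card_ord -natrX -qdimE.
Qed.

Lemma conjc_sum (I : finType) (F : I -> C) : conjc (\sum_k F k) = \sum_k conjc (F k).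
Proof. exact: rmorph_sum. Qed.

Lemma trE m p (A M : 'M[C]_(m, p)) : \tr (adj A *m M) = \sum_i \sum_l conjc (A l i) * M l i.
Proof. by rewrite /mxtrace; apply: eq_bigr => i _; rewrite mxE; apply: eq_bigr => l _; rewrite mxE. Qed.

Lemma sum_delta2 (I : finType) (j : I) (F : I -> C) : \sum_i (F i * (i == j)%:R) = F j.
Proof. by rewrite -(@sum_delta R _ j F); apply: eq_bigr => i _; rewrite mulrC. Qed.

Lemma step1 (M : 'M[C]_d) (l i : 'I_d) :
  \sum_(a : {ffun 'I_n -> 'I_dL * 'I_dL}) Dn R a l i * \tr (adj (Dn R a) *m M) = d%:R * M l i.
Proof.
under eq_bigr => a _ do rewrite trE mulr_sumr.
under eq_bigr => a _ do under eq_bigr => i' _ do rewrite mulr_sumr.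
rewrite exchange_big /=; under eq_bigr => i' _ do rewrite exchange_big /=.
have e : forall i' l', \sum_(a : {ffun 'I_n -> 'I_dL * 'I_dL}) Dn R a l i * (conjc (Dn R a l' i') * M l' i') =
   d%:R * M l' i' * (i' == i)%:R * (l' == l)%:R.
  move=> i' l'.
  transitivity (M l' i' * (d%:R * (l' == l)%:R * (i' == i)%:R)); last by ring.
  rewrite -(Dn_par l' i' l i) mulr_sumr; apply: eq_bigr => a _; ring.
under eq_bigr => i' _ do under eq_bigr => l' _ do rewrite e.
under eq_bigr => i' _ do rewrite sum_delta2.
by rewrite sum_delta2.
Qed.

Lemma parsevalC (M : 'M[C]_d) :
  \sum_(a : {ffun 'I_n -> 'I_dL * 'I_dL}) \tr (adj (Dn R a) *m M) * conjc (\tr (adj (Dn R a) *m M)) =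
  d%:R * \tr (adj M *m M).
Proof.
set t := fun a => \tr (adj (Dn R a) *m M).
transitivity (\sum_a (\sum_i \sum_l conjc (Dn R a l i) * M l i) * conjc (t a)).
  by apply: eq_bigr => a _; rewrite /t trE.
under eq_bigr => a _ do rewrite mulr_suml.
under eq_bigr => a _ do under eq_bigr => i _ do rewrite mulr_suml.
rewrite exchange_big /=; under eq_bigr => i _ do rewrite exchange_big /=.
have e : forall i l, \sum_(a : {ffun 'I_n -> 'I_dL * 'I_dL}) conjc (Dn R a l i) * M l i * conjc (t a) =
   M l i * conjc (d%:R * M l i).
  move=> i l; rewrite -step1 conjc_sum mulr_sumr; apply: eq_bigr => a _.
  by rewrite conjcM /t; ring.
under eq_bigr => i _ do under eq_bigr => l _ do rewrite e conjcM conjc_nat.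
rewrite trE mulr_sumr; apply: eq_bigr => i _; rewrite mulr_sumr; apply: eq_bigr => l _; ring.
Qed.

End Tensor.



Section Frob.
Variable R : realType.
Local Notation C := R[i].

Lemma ReD (x y : C) : complex.Re (x + y) = complex.Re x + complex.Re y.
Proof. by case: x y => a b [c e]. Qed.

Lemma Re_natmul (z : C) k : complex.Re (k%:R * z) = k%:R * complex.Re z.
Proof.
elim: k => [|k IH]; first by rewrite !mul0r.
by rewrite -addn1 !natrD !mulrDl ReD IH !mul1r.
Qed.

Lemma Re_nat k : complex.Re (k%:R : C) = k%:R.
Proof. by rewrite -[k%:R]mulr1 Re_natmul mulr1. Qed.

Lemma adj_mul m p q (A : 'M[C]_(m, p)) (B : 'M[C]_(p, q)) : adj (A *m B) = adj B *m adj A.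
Proof.
apply/matrixP => i j; rewrite !mxE conjc_sum; apply: eq_bigr => k _.
by rewrite !mxE conjcM mulrC.
Qed.

Lemma adjK m p (A : 'M[C]_(m, p)) : adj (adj A) = A.
Proof. by apply/matrixP => i j; rewrite !mxE conjcK. Qed.

Lemma adjB m p (A B : 'M[C]_(m, p)) : adj (A - B) = adj A - adj B.
Proof. by apply/matrixP => i j; rewrite !mxE rmorphB. Qed.

Definition fr2 m p (A : 'M[C]_(m, p)) : R := complex.Re (\tr (adj A *m A)).
Arguments fr2 {m p} A.

Lemma fr2E m p (A : 'M[C]_(m, p)) : fr2 A = \sum_i \sum_l nsq R (A l i).
Proof.
rewrite /fr2 trE Re_sum; apply: eq_bigr => i _; rewrite Re_sum; apply: eq_bigr => l _.
by rewrite nsq_re.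
Qed.

Lemma fr2_ge0 m p (A : 'M[C]_(m, p)) : 0 <= fr2 A.
Proof. by rewrite fr2E; apply: sumr_ge0 => i _; apply: sumr_ge0 => l _; apply: nsq_ge0. Qed.

Lemma fr2D m p (A B : 'M[C]_(m, p)) : fr2 (A + B) <= 2 * fr2 A + 2 * fr2 B.
Proof.
rewrite !fr2E !mulr_sumr -big_split /=; apply: ler_sum => i _.
rewrite !mulr_sumr -big_split /=; apply: ler_sum => l _.
by rewrite mxE nsqD.
Qed.

Lemma frobE m p (A : 'M[C]_(m, p)) : frob A = Num.sqrt (fr2 A).
Proof. by []. Qed.

Lemma fr2_adj m (A : 'M[C]_m) : fr2 (adj A) = fr2 A.
Proof. by rewrite /fr2 adjK mxtrace_mulC. Qed.

Lemma fr2_mulr m (A Q : 'M[C]_m) : Q *m adj Q = 1%:M -> fr2 (A *m Q) = fr2 A.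
Proof.
move=> hQ; rewrite /fr2 adj_mul mxtrace_mulC !mulmxA -[_ *m adj Q]mulmxA hQ mulmx1.
by rewrite mxtrace_mulC.
Qed.

Lemma fr2_mull m (A Q : 'M[C]_m) : adj Q *m Q = 1%:M -> fr2 (Q *m A) = fr2 A.
Proof.
by move=> hQ; rewrite /fr2 adj_mul -mulmxA [adj Q *m _]mulmxA hQ mul1mx.
Qed.

End Frob.
Arguments fr2 {R m p} A.



Lemma quartic (R : realType) (X Y e D : R) : 0 <= X -> 0 <= Y -> X <= D -> Y <= D ->
  `|X - Y| <= e -> `|X ^+ 4 - Y ^+ 4| <= 2 * D * (X ^+ 2 + Y ^+ 2) * e.
Proof.
move=> hX hY hXD hYD he.
have -> : X ^+ 4 - Y ^+ 4 = (X - Y) * ((X + Y) * (X ^+ 2 + Y ^+ 2)) by ring.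
have hP : 0 <= (X + Y) * (X ^+ 2 + Y ^+ 2) by rewrite mulr_ge0 ?addr_ge0 ?sqr_ge0.
rewrite normrM (ger0_norm hP).
have h2 : (X + Y) * (X ^+ 2 + Y ^+ 2) <= 2 * D * (X ^+ 2 + Y ^+ 2).
  by rewrite ler_wpM2r ?addr_ge0 ?sqr_ge0 //; lra.
rewrite [X in _ <= X]mulrC; apply: ler_pM => //; exact: normr_ge0.
Qed.

Section Main.
Variable R : realType.
Local Notation C := R[i].
Variable dL : nat.
Hypothesis hdL : (1 < dL)%N.
Variable n : nat.
Local Notation d := (qdim dL n).
Local Notation dr := (d%:R : R).
Local Notation DD := {ffun 'I_n -> 'I_dL * 'I_dL}.

Lemma d_gt0 : (0 < d)%N.
Proof. by rewrite qdimE expn_gt0; apply/orP; left; lia. Qed.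

Lemma dr_gt0 : 0 < dr.
Proof. by rewrite ltr0n d_gt0. Qed.

Lemma parseval (Q : 'M[C]_d) :
  \sum_(a : DD) cabs (\tr (adj (Dn R a) *m Q)) ^+ 2 = dr * fr2 Q.
Proof.
have := congr1 (@complex.Re R) (@parsevalC R dL hdL n Q).
rewrite Re_natmul Re_sum => <-; apply: eq_bigr => a _.
by rewrite cabs_sqr mulcJ.
Qed.

Lemma term_le (Q : 'M[C]_d) (a : DD) :
  cabs (\tr (adj (Dn R a) *m Q)) ^+ 2 <= dr * fr2 Q.
Proof.
rewrite -parseval (bigD1 a) //= lerDl; apply: sumr_ge0 => b _.
by rewrite exprn_ge0 // cabs_ge0.
Qed.

Lemma unit_l (Q : 'M[C]_d) : unitary_mx Q -> adj Q *m Q = 1%:M.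
Proof. exact: mulmx1C. Qed.

Lemma Dn_unit_r (b : DD) : Dn R b *m adj (Dn R b) = 1%:M.
Proof. exact: mulmx1C (@Dn_unit R dL hdL n b). Qed.

Lemma fr2_Dn (b : DD) : fr2 (Dn R b) = dr.
Proof. by rewrite /fr2 (@Dn_unit R dL hdL n b) mxtrace1 Re_nat. Qed.

Lemma fr2M (b : DD) (Q : 'M[C]_d) : unitary_mx Q -> fr2 (Q *m Dn R b *m adj Q) = dr.
Proof.
move=> hQ; rewrite fr2_mulr; last by rewrite adjK unit_l.
by rewrite fr2_mull ?unit_l // fr2_Dn.
Qed.

Lemma fr2MN (b : DD) (U V : 'M[C]_d) : unitary_mx U -> unitary_mx V ->
  fr2 (U *m Dn R b *m adj U - V *m Dn R b *m adj V) <= 4 * fr2 (U - V).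
Proof.
move=> hU hV.
have -> : U *m Dn R b *m adj U - V *m Dn R b *m adj V =
   (U - V) *m Dn R b *m adj U + V *m (Dn R b *m adj (U - V)).
  by rewrite adjB !mulmxBl !mulmxBr !mulmxA addrA subrK.
apply: le_trans; first exact: fr2D.
rewrite fr2_mulr; last by rewrite adjK unit_l.
rewrite fr2_mulr; last exact: Dn_unit_r.
rewrite fr2_mull ?unit_l // fr2_mull; last exact: (@Dn_unit R dL hdL n b).
by rewrite fr2_adj; lra.
Qed.


Lemma sq_le (x y : R) : 0 <= x -> 0 <= y -> x ^+ 2 <= y ^+ 2 -> x <= y.
Proof. by move=> hx hy; rewrite (ler_pXn2r (n:=2)) // nnegrE. Qed.

Lemma diff_le (a b : DD) (U V : 'M[C]_d) : unitary_mx U -> unitary_mx V ->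
  `|cabs (\tr (adj (Dn R a) *m (U *m Dn R b *m adj U))) -
    cabs (\tr (adj (Dn R a) *m (V *m Dn R b *m adj V)))| <=
  2 * Num.sqrt dr * frob (U - V).
Proof.
move=> hU hV.
apply: le_trans; first exact: cabs_sub.
have -> : forall X Y : 'M[C]_d, \tr (adj (Dn R a) *m X) - \tr (adj (Dn R a) *m Y) =
    \tr (adj (Dn R a) *m (X - Y)) by move=> X Y; rewrite mulmxBr raddfB.
have hd := dr_gt0.
apply: sq_le; first exact: cabs_ge0.
  by rewrite !mulr_ge0 ?sqrtr_ge0.
rewrite !exprMn (sqr_sqrtr (ltW hd)) frobE (sqr_sqrtr (@fr2_ge0 R _ _ (U - V))).
apply: le_trans; first exact: term_le.
have := fr2MN b U V hU hV; have := @fr2_ge0 R _ _ (U - V).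
set f := fr2 (_ - _); set g := fr2 (U - V) => h0 h1.
rewrite -mulrA mulrCA; apply: ler_wpM2l; first exact: ltW.
by rewrite expr2; lra.
Qed.

Lemma X_le (a b : DD) (U : 'M[C]_d) : unitary_mx U ->
  cabs (\tr (adj (Dn R a) *m (U *m Dn R b *m adj U))) <= dr.
Proof.
move=> hU; have hd := dr_gt0.
apply: sq_le; [exact: cabs_ge0 | exact: ltW |].
by apply: le_trans; [exact: term_le | rewrite fr2M // expr2].
Qed.

Lemma sum_b (b : DD) (U V : 'M[C]_d) : unitary_mx U -> unitary_mx V ->
  \sum_(a : DD) `|cabs (\tr (adj (Dn R a) *m (U *m Dn R b *m adj U))) ^+ 4 -
    cabs (\tr (adj (Dn R a) *m (V *m Dn R b *m adj V))) ^+ 4| <=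
  4 * dr ^+ 3 * (2 * Num.sqrt dr * frob (U - V)).
Proof.
move=> hU hV.
set e := 2 * Num.sqrt dr * frob (U - V).
apply: le_trans.
  apply: ler_sum => a _; apply: quartic; try exact: cabs_ge0.
  - exact: X_le.
  - exact: X_le.
  - exact: diff_le.
under eq_bigr => a _ do rewrite (mulrC _ e) mulrA -mulrA.
rewrite -mulr_sumr -mulr_sumr big_split /= !parseval !fr2M //.
by rewrite le_eqVlt; apply/orP; left; apply/eqP; ring.
Qed.

End Main.

Local Close Scope complex_scope.


Theorem corollary2 (R : realType) (dL n : nat) (hdL : (1 < dL)%N)
    (U V : 'M[R[i]]_(qdim dL n)) :
  unitary_mx U -> unitary_mx V ->
  `|H2 U - H2 V| <= 4 * pi / Num.sqrt (qdim dL n)%:R * frob (U - V).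
Proof.
move=> hU hV.
have hd : 0 < ((qdim dL n)%:R : R) := @dr_gt0 R dL hdL n.
set dr := ((qdim dL n)%:R : R) in hd *.
set F := frob (U - V).
have hF : 0 <= F := sqrtr_ge0 _.
set s := Num.sqrt dr.
have hs : 0 < s by rewrite sqrtr_gt0.
rewrite /H2.
set k := ((qdim dL n)%:R ^+ 6)^-1.
set SU := (\sum_(a : {ffun 'I_n -> 'I_dL * 'I_dL}) \sum_(b : {ffun 'I_n -> 'I_dL * 'I_dL})
   cabs (\tr (adj (Dn R a) *m U *m Dn R b *m adj U)) ^+ 4).
set SV := (\sum_(a : {ffun 'I_n -> 'I_dL * 'I_dL}) \sum_(b : {ffun 'I_n -> 'I_dL * 'I_dL})
   cabs (\tr (adj (Dn R a) *m V *m Dn R b *m adj V)) ^+ 4).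
have hk : 0 <= k by rewrite /k invr_ge0 exprn_ge0 // ltW.
have -> : 1 - k * SU - (1 - k * SV) = k * (SV - SU) by ring.
rewrite normrM (ger0_norm hk).
set B := 4 * dr ^+ 3 * (2 * s * F).
have hb : forall b : {ffun 'I_n -> 'I_dL * 'I_dL},
    \sum_(a : {ffun 'I_n -> 'I_dL * 'I_dL})
      `|cabs (\tr (adj (Dn R a) *m V *m Dn R b *m adj V)) ^+ 4 -
        cabs (\tr (adj (Dn R a) *m U *m Dn R b *m adj U)) ^+ 4| <= B.
  move=> b; rewrite (eq_bigr (fun a => `|cabs (\tr (adj (Dn R a) *m (U *m Dn R b *m adj U))) ^+ 4
     - cabs (\tr (adj (Dn R a) *m (V *m Dn R b *m adj V))) ^+ 4|)).
    exact: (@sum_b R dL hdL n b U V hU hV).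
  by move=> a _; rewrite !mulmxA distrC.
have h1 : `|SV - SU| <= \sum_(b : {ffun 'I_n -> 'I_dL * 'I_dL}) B.
  rewrite /SV /SU -sumrB.
  apply: le_trans; first exact: ler_norm_sum.
  apply: le_trans.
    apply: ler_sum => a _; rewrite -sumrB; exact: ler_norm_sum.
  rewrite exchange_big /=; apply: ler_sum => b _; exact: hb.
rewrite sumr_const card_pairs in h1.
apply: le_trans; first exact: (ler_wpM2l hk h1).
have ds : dr = s ^+ 2 by rewrite sqr_sqrtr // ltW.
have -> : k * (B *+ (qdim dL n * qdim dL n)) = 8 * (F / s).
  rewrite /k /B -[_ *+ (_ * _)%N]mulr_natr natrM -/dr ds; field.
  by rewrite gt_eqF.
have -> : 4 * pi / s * F = (4 * pi) * (F / s) by rewrite mulrA mulrAC.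
apply: ler_wpM2r; first by rewrite divr_ge0 // ltW.
have := @pi_ge2 R; lra.
Qed.
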